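(* Let $\underline{Q}$ be a lower transition rate operator. Then for any $t>0$ and any $x,y\in\mathcal{X}$: \begin{equation*} \overline{T}_{t}\mathbb{I}_{x}(y)>0 ~~\Leftrightarrow~~ x\text{ is upper reachable from }y. \end{equation*}
   Context: $\mathcal{X}$ is a finite state space and $\mathcal{L}(\mathcal{X})$ is the set of real-valued functions on $\mathcal{X}$; $\mathbb{I}_x$ denotes the indicator of $\{x\}$. A lower transition rate operator is a map $\underline{Q}\colon\mathcal{L}(\mathcal{X})\to\mathcal{L}(\mathcal{X})$ such that for all $f,g\in\mathcal{L}(\mathcal{X})$, $\lambda\geq0$, $\mu\in\mathbb{R}$ and $x,y\in\mathcal{X}$: $\underline{Q}(\mu)=0$; $\underline{Q}(f+g)\geq\underline{Q}(f)+\underline{Q}(g)$; $\underline{Q}(\lambda f)=\lambda\underline{Q}(f)$; and $x\neq y\Rightarrow\underline{Q}(\mathbb{I}_y)(x)\geq0$. Its conjugate is $\overline{Q}f\coloneqq-\underline{Q}(-f)$. For each $t\geq0$, $\underline{T}_t$ is defined for every $f$ by the (uniquely solvable) differential equation $\frac{d}{dt}\underline{T}_tf=\underline{Q}\,\underline{T}_tf$ for all $t\geq0$ with $\underline{T}_0f=f$, and $\overline{T}_tf\coloneqq-\underline{T}_t(-f)$. Upper reachability: $x$ is upper reachable from $y$ if there is a sequence $y=x_0,\dots,x_n=x$ with, for all $k\in\{1,\dots,n\}$, $x_k\neq x_{k-1}$ and $\overline{Q}(\mathbb{I}_{x_k})(x_{k-1})>0$. *)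

(* Defs.v *)
From HB Require Import structures.
From mathcomp Require Import all_boot all_order all_algebra.
From mathcomp Require Import all_classical all_reals all_analysis.
Set Implicit Arguments. Unset Strict Implicit. Unset Printing Implicit Defensive.
Import Order.TTheory GRing.Theory Num.Theory.
Import numFieldNormedType.Exports.
Local Open Scope ring_scope.
Local Open Scope classical_set_scope.

(* L(X) is represented as the function type X -> R. *)

Definition indicator1 {X : finType} {R : realType} (x : X) : X -> R :=
  fun z => if z == x then 1 else 0.

Definition lower_transition_rate_operator {X : finType} {R : realType}
  (Q : (X -> R) -> (X -> R)) : Prop :=
  [/\ (forall mu : R, Q (fun _ => mu) = (fun _ => 0)),
      (forall (f g : X -> R) (x : X), Q f x + Q g x <= Q (fun z => f z + g z) x),
      (forall (lam : R) (f : X -> R), 0 <= lam ->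
          Q (fun z => lam * f z) = (fun z => lam * Q f z)) &
      (forall x y : X, x != y -> 0 <= Q (indicator1 y) x)].

Definition upper_op {X : finType} {R : realType}
  (Q : (X -> R) -> (X -> R)) (f : X -> R) : X -> R :=
  fun x => - Q (fun z => - f z) x.

(* T is the (lower) semigroup generated by Q: for every f, t |-> T t f solves
   d/dt T_t f = Q (T_t f) for all t >= 0 (right derivative at t = 0),
   with T_0 f = f. *)
Definition lower_semigroup_of {X : finType} {R : realType}
  (Q : (X -> R) -> (X -> R)) (T : R -> (X -> R) -> (X -> R)) : Prop :=
  forall f : X -> R,
    T 0 f = f /\
    (forall x : X,
       (fun h : R => h^-1 * (T h f x - f x)) @ 0^'+ --> Q f x) /\
    (forall (t : R) (x : X), 0 < t ->
       derivable (fun s : R => T s f x) t 1 /\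
       (fun s : R => T s f x)^`() t = Q (T t f) x).

Definition upper_semigroup {X : finType} {R : realType}
  (T : R -> (X -> R) -> (X -> R)) (t : R) (f : X -> R) : X -> R :=
  fun x => - T t (fun z => - f z) x.

Definition upper_reachable {X : finType} {R : realType}
  (Q : (X -> R) -> (X -> R)) (x y : X) : Prop :=
  exists (n : nat) (s : nat -> X),
    [/\ s 0%N = y, s n = x &
        forall k : nat, (1 <= k <= n)%N ->
          s k != s k.-1 /\ 0 < upper_op Q (indicator1 (s k)) (s k.-1)].

(* Main.v *)
Require Import Defs.
From HB Require Import structures.
From mathcomp Require Import all_boot all_order all_algebra.
From mathcomp Require Import all_classical all_reals all_analysis.
From mathcomp Require Import ring lra.
Import Order.TTheory GRing.Theory Num.Theory.
Import numFieldNormedType.Exports.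
Local Open Scope ring_scope.
Local Open Scope classical_set_scope.

Lemma is_derive_comp1 {R : realType} (f g : R -> R) (x df dg : R) :
  is_derive x 1 f df -> is_derive (f x) 1 g dg -> is_derive x 1 (g \o f) (dg * df).
Proof.
move=> Hf Hg.
have df1 : derivable f x 1 by case: Hf.
have dg1 : derivable g (f x) 1 by case: Hg.
apply: DeriveDef.
  apply/derivable1_diffP; apply: differentiable_comp; exact/derivable1_diffP.
by rewrite -derive1E derive1_comp // !derive1E !derive_val.
Qed.

Lemma lim_le_right {R : realType} (f : R -> R) (L c t : R) : 0 < t ->
  f x @[x --> 0^'+] --> L -> (forall s, 0 < s -> s < t -> f s <= c) -> L <= c.
Proof.
move=> t0 FL H; rewrite leNgt; apply/negP => cL.
near (0:R)^'+ => s.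
have : f s <= c.
  apply: H; near: s; [exact: nbhs_right_gt | exact: nbhs_right_lt].
rewrite leNgt => /negP; apply; near: s.
exact: (@cvgr_gt _ _ _ _ f L FL c cL).
Unshelve. all: by end_near.
Qed.

Lemma lim_ge_right {R : realType} (f : R -> R) (L c t : R) : 0 < t ->
  f x @[x --> 0^'+] --> L -> (forall s, 0 < s -> s < t -> c <= f s) -> c <= L.
Proof.
move=> t0 FL H; rewrite -lerN2; apply: (@lim_le_right _ (fun x => - f x) _ _ t) => //.
  exact: cvgN.
by move=> s s0 st; rewrite lerN2; apply: H.
Qed.

Definition pos {R : realType} (r : R) := if 0 <= r then r else 0.
Definition pp {R : realType} (r : R) := pos r ^+ 2.

Lemma pp_key {R : realType} (r h : R) : h != 0 ->
  `|2 * pos r - h^-1 * (pp (h + r) - pp r)| <= `|h|.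
Proof.
move=> h0.
have [D [D0 D1 ->]] : exists D, [/\ 0 <= D, D <= h^+2 & pp (h + r) - pp r = 2 * pos r * h + D].
  exists (pos (h + r) ^+2 - pos r ^+2 - 2 * pos r * h).
  split; last by rewrite /pp; ring.
  - rewrite /pos; case: (leP 0 r) => r0; case: (leP 0 (h + r)) => hr0; nra.
  - rewrite /pos; case: (leP 0 r) => r0; case: (leP 0 (h + r)) => hr0; nra.
have -> : 2 * pos r - h^-1 * (2 * pos r * h + D) = - (D / h).
  by field.
rewrite normrN normrM normfV ler_pdivrMr ?normr_gt0 //.
by rewrite ger0_norm // -normrM -expr2 ger0_norm ?sqr_ge0.
Qed.

Lemma is_derive_pp {R : realType} (r : R) : is_derive r 1 pp (2 * pos r).
Proof.
have H : (fun h : R => h^-1 *: ((pp \o shift r) (h *: 1) - pp r)) @ 0^' --> 2 * pos r.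
  apply/cvgrPdist_le => e e0; near=> h.
  have h0 : h != 0 by near: h; exact: nbhs_dnbhs_neq.
  rewrite /= [h%:A]mulr1.
  apply: le_trans (@pp_key _ r h h0) _.
  near: h; exact: dnbhs0_le.
apply: DeriveDef; first by apply/cvg_ex; exists (2 * pos r).
exact: cvg_lim.
Unshelve. all: by end_near.
Qed.


Lemma is_derive_lin {R : realType} (q r : R) : is_derive r 1 (fun s : R => - (q * s)) (- q).
Proof.
have H : is_derive r 1 (q \*: (@id R)) (q *: 1) := is_deriveZ q (is_derive_id r 1).
have H2 := is_deriveN H.
have -> : (fun s : R => - (q * s)) = (- (q \*: (@id R)))%R by apply/funext=> s.
by apply: is_derive_eq H2 _; rewrite /GRing.scale /= mulr1.
Qed.

Lemma is_derive_expl {R : realType} (q r : R) :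
  is_derive r 1 (fun s : R => expR (- (q * s))) (expR (- (q * r)) * (- q)).
Proof.
have H := @is_derive_comp1 _ _ _ _ _ _ (is_derive_lin q r) (is_derive_expR (- (q * r))).
exact: H.
Qed.

Lemma is_derive_mul {R : realType} (f g : R -> R) (r df dg : R) :
  is_derive r 1 f df -> is_derive r 1 g dg ->
  is_derive r 1 (fun s => f s * g s) (f r * dg + g r * df).
Proof.
move=> Hf Hg.
have H := is_deriveM Hf Hg.
have -> : (fun s => f s * g s) = (f * g)%R by apply/funext=> s.
by apply: is_derive_eq H _.
Qed.

Lemma mono_exp {R : realType} (F dF : R -> R) (q : R) :
  (forall s : R, 0 < s -> is_derive s 1 F (dF s)) ->
  (forall s : R, 0 < s -> q * F s <= dF s) ->
  forall s t : R, 0 < s -> s <= t ->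
  expR (- (q * s)) * F s <= expR (- (q * t)) * F t.
Proof.
move=> dF1 dF2 s t s0 st.
set G := fun r => expR (- (q * r)) * F r.
have dG : forall r : R, 0 < r ->
    is_derive r 1 G (expR (- (q * r)) * dF r + F r * (expR (- (q * r)) * (- q))).
  move=> r r0; apply: is_derive_mul; [exact: is_derive_expl | exact: dF1].
have itv0 : forall r : R, r \in `]0, t + 1[%R -> 0 < r.
  by move=> r; rewrite in_itv /= => /andP[].
apply: (@ger0_derive1_le_oo _ G 0 (t + 1)).
- by move=> r /itv0 r0; case: (dG r r0).
- move=> r /itv0 r0; rewrite derive1E (@derive_val _ _ _ _ _ _ _ (dG r r0)).
  have := dF2 r r0; have := expR_gt0 (- (q * r)).
  move=> e0 h.
  have -> : expR (- (q * r)) * dF r + F r * (expR (- (q * r)) * - q) =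
    expR (- (q * r)) * (dF r - q * F r) by ring.
  by rewrite mulr_ge0 ?subr_ge0 // ltW.
- move=> r; rewrite inE /= in_itv /= => /andP[r0 _]; apply: differentiable_continuous.
  by apply/derivable1_diffP; case: (dG r r0).
- by rewrite in_itv /= s0 /=; apply: le_lt_trans st _; rewrite ltrDl.
- by rewrite in_itv /= (lt_le_trans s0 st) /= ltrDl.
- exact: st.
Qed.

Lemma mono_exp_lt {R : realType} (F dF : R -> R) (q : R) :
  (forall s : R, 0 < s -> is_derive s 1 F (dF s)) ->
  (forall s : R, 0 < s -> q * F s < dF s) ->
  forall s t : R, 0 < s -> s < t ->
  expR (- (q * s)) * F s < expR (- (q * t)) * F t.
Proof.
move=> dF1 dF2 s t s0 st.
set G := fun r => expR (- (q * r)) * F r.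
have dG : forall r : R, 0 < r ->
    is_derive r 1 G (expR (- (q * r)) * dF r + F r * (expR (- (q * r)) * (- q))).
  move=> r r0; apply: is_derive_mul; [exact: is_derive_expl | exact: dF1].
have itv0 : forall r : R, r \in `]0, t + 1[%R -> 0 < r.
  by move=> r; rewrite in_itv /= => /andP[].
apply: (@gtr0_derive1_lt_oo _ G 0 (t + 1)).
- by move=> r /itv0 r0; case: (dG r r0).
- move=> r /itv0 r0; rewrite derive1E (@derive_val _ _ _ _ _ _ _ (dG r r0)).
  have := dF2 r r0; have := expR_gt0 (- (q * r)).
  move=> e0 h.
  have -> : expR (- (q * r)) * dF r + F r * (expR (- (q * r)) * - q) =
    expR (- (q * r)) * (dF r - q * F r) by ring.
  by rewrite mulr_gt0 ?subr_gt0.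
- move=> r; rewrite inE /= in_itv /= => /andP[r0 _]; apply: differentiable_continuous.
  by apply/derivable1_diffP; case: (dG r r0).
- by rewrite in_itv /= s0 /=; apply: lt_trans st _; rewrite ltrDl.
- by rewrite in_itv /= (lt_trans s0 st) /= ltrDl.
- exact: st.
Qed.

Lemma is_derive_opp {R : realType} (f : R -> R) (s df : R) :
  is_derive s 1 f df -> is_derive s 1 (fun r => - f r) (- df).
Proof.
move=> H; have H2 := is_deriveN H.
have -> : (fun r => - f r) = (- f)%R by apply/funext.
exact: H2.
Qed.

Lemma exp_cvg {R : realType} (F : R -> R) (q L : R) :
  F x @[x --> 0^'+] --> L ->
  (fun s => expR (- (q * s)) * F s) x @[x --> 0^'+] --> L.
Proof.
move=> FL.
have E : (fun s : R => expR (- (q * s))) x @[x --> 0^'+] --> (1:R).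
  apply: cvg_at_right_filter.
  have -> : (1:R) = expR (- (q * 0)) by rewrite mulr0 oppr0 expR0.
  have D : derivable (fun s : R => expR (- (q * s))) 0 1.
    by case: (is_derive_expl q 0).
  exact: (differentiable_continuous (proj1 (derivable1_diffP _ _) D)).
rewrite -[L]mul1r.
exact: cvgM E FL.
Qed.

Lemma gronwall0 {R : realType} (F dF : R -> R) (K : R) :
  (forall s : R, 0 < s -> is_derive s 1 F (dF s)) ->
  (forall s : R, 0 < s -> dF s <= K * F s) ->
  F x @[x --> 0^'+] --> 0 ->
  forall t : R, 0 < t -> F t <= 0.
Proof.
move=> dF1 dF2 FL t t0.
have H2 : forall s : R, 0 < s -> K * - F s <= - dF s.
  by move=> s s0; rewrite mulrN lerN2; apply: dF2.
have M := @mono_exp _ (fun r => - F r) (fun r => - dF r) K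
  (fun s s0 => @is_derive_opp _ _ _ _ (dF1 s s0)) H2.
have M2 : forall s, 0 < s -> s < t ->
    expR (- (K * t)) * F t <= expR (- (K * s)) * F s.
  move=> s s0 st; have := M s t s0 (ltW st).
  by rewrite !mulrN lerN2.
have := @lim_ge_right _ _ _ _ t t0 (@exp_cvg _ F K 0 FL) M2.
by rewrite pmulr_rle0 // expR_gt0.
Qed.


Section Alg.
Context {X : finType} {R : realType} (Q : (X -> R) -> (X -> R)).
Hypothesis HQ : lower_transition_rate_operator Q.

Lemma Q0 : Q (fun _ => 0) = (fun _ => 0).
Proof. by case: HQ => H1 _ _ _; apply: H1. Qed.

Lemma Qadd (f g : X -> R) w : Q f w + Q g w <= Q (fun z => f z + g z) w.
Proof. by case: HQ => _ H2 _ _; apply: H2. Qed.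

Lemma Qsum (I : Type) (r : seq I) (P : pred I) (F : I -> X -> R) w :
  \sum_(i <- r | P i) Q (F i) w <= Q (fun z => \sum_(i <- r | P i) F i z) w.
Proof.
elim: r => [|a r IH].
  have -> : (fun z => \sum_(i <- [::] | P i) F i z) = (fun _ => 0).
    by apply/funext => z; rewrite big_nil.
  by rewrite big_nil Q0.
have -> : (fun z => \sum_(i <- a :: r | P i) F i z) =
   (fun z => (if P a then F a z else 0) + \sum_(i <- r | P i) F i z).
  by apply/funext => z; rewrite big_cons; case: (P a) => //; rewrite add0r.
rewrite big_cons; case: (P a).
  apply: le_trans (Qadd _ _ w); by rewrite lerD2l.
have -> : (fun z => 0 + \sum_(i <- r | P i) F i z) = (fun z => \sum_(i <- r | P i) F i z).
  by apply/funext => z; rewrite add0r.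
exact: IH.
Qed.

Lemma decomp (f : X -> R) : f = (fun z => \sum_w' f w' * indicator1 w' z).
Proof.
apply/funext => z; rewrite (bigD1 z) //= /indicator1 eqxx mulr1 big1 ?addr0 //.
by move=> i iz; rewrite eq_sym (negbTE iz) mulr0.
Qed.

Lemma L2 (f : X -> R) w :
  \sum_w' Q (fun z => f w' * indicator1 w' z) w <= Q f w.
Proof. by rewrite {2}(decomp f); apply: Qsum. Qed.

Lemma QcIp c a w : 0 <= c ->
  Q (fun z => c * indicator1 a z) w = c * Q (indicator1 a) w.
Proof.
case: HQ => _ _ H3 _ c0.
by rewrite (H3 c (indicator1 a) c0).
Qed.

Lemma QcIn c a w : c <= 0 ->
  Q (fun z => c * indicator1 a z) w = (- c) * Q (fun z => - indicator1 a z) w.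
Proof.
case: HQ => _ _ H3 _ c0.
have -> : (fun z => c * indicator1 a z) = (fun z => (- c) * (- indicator1 a z)).
  by apply/funext => z; rewrite mulrNN.
by rewrite (H3 (- c) (fun z => - indicator1 a z)) // oppr_ge0.
Qed.

Lemma QsubQ (f : X -> R) w : Q f w + Q (fun z => - f z) w <= 0.
Proof.
apply: le_trans (Qadd _ _ w) _.
have -> : (fun z => f z + - f z) = (fun _ => 0) by apply/funext => z; rewrite subrr.
by rewrite Q0.
Qed.

Lemma L1 (h : X -> R) w : (forall z, 0 <= h z) -> h w * Q (indicator1 w) w <= Q h w.
Proof.
move=> h0; apply: le_trans (L2 h w).
rewrite (bigD1 w) //= QcIp // -[X in X <= _]addr0 lerD2l.
apply: sumr_ge0 => i iw; rewrite QcIp // mulr_ge0 //.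
by case: HQ => _ _ _ H4; apply: H4; rewrite eq_sym.
Qed.

Definition Cst := \sum_a \sum_b `|Q (fun z => - indicator1 a z) b|.

Lemma Cbound a b : `|Q (fun z => - indicator1 a z) b| <= Cst.
Proof.
rewrite /Cst (bigD1 a) //= (bigD1 b) //=.
have S1 : 0 <= \sum_(i | i != b) `|Q (fun z => - indicator1 a z) i|.
  by apply: sumr_ge0 => i _.
have S2 : 0 <= \sum_(i | i != a) \sum_b0 `|Q (fun z => - indicator1 i z) b0|.
  by apply: sumr_ge0 => i _; apply: sumr_ge0.
lra.
Qed.

Lemma Cst_ge0 : 0 <= Cst.
Proof. by apply: sumr_ge0 => i _; apply: sumr_ge0. Qed.

Lemma K0 (a : X -> R) w : (forall z, 0 <= a z) -> Q a w <= Cst * \sum_w' a w'.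
Proof.
move=> a0.
have E1 := L2 (fun z => - a z) w.
have E2 : \sum_w' Q (fun z => - a w' * indicator1 w' z) w =
          \sum_w' a w' * Q (fun z => - indicator1 w' z) w.
  by apply: eq_bigr => i _; rewrite QcIn ?opprK // oppr_le0.
rewrite E2 in E1.
have E3 := QsubQ a w.
have E4 : - \sum_w' a w' * Q (fun z => - indicator1 w' z) w <= Cst * \sum_w' a w'.
  rewrite -sumrN mulr_sumr; apply: ler_sum => i _.
  rewrite -mulrN mulrC; apply: ler_wpM2r => //.
  apply: le_trans (Cbound i w); by rewrite -normrN ler_norm.
lra.
Qed.

Lemma K1 (u : X -> R) w : 0 < u w -> Q u w <= Cst * \sum_w' pos (u w').
Proof.
move=> uw.
have E1 := Qadd u (fun z => if 0 <= u z then 0 else - u z) w.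
have EQ : (fun z => u z + (if 0 <= u z then 0 else - u z)) = (fun z => pos (u z)).
  by apply/funext => z; rewrite /pos; case: ifP => _; [rewrite addr0 | rewrite subrr].
rewrite EQ in E1.
have E2 := L1 (fun z => if 0 <= u z then 0 else - u z) w.
rewrite /= (ltW uw) mul0r in E2.
have E3 : 0 <= Q (fun z => if 0 <= u z then 0 else - u z) w.
  by apply: E2 => z /=; case: (leP 0 (u z)) => h //; rewrite oppr_ge0 ltW.
have E5 : Q (fun z => pos (u z)) w <= Cst * \sum_w' pos (u w').
  by apply: K0 => z; rewrite /pos; case: (leP 0 (u z)) => h //; rewrite ltW.
lra.
Qed.

Lemma K2 (u : X -> R) w z : (forall y, u y <= 0) -> w != z ->
  Q u z <= u w * upper_op Q (indicator1 w) z + u z * Q (indicator1 z) z.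
Proof.
move=> u0 wz.
set c := u w.
have E1 := Qadd u (fun y => - u y + c * indicator1 w y) z.
have EQ : (fun y => u y + (- u y + c * indicator1 w y)) = (fun y => c * indicator1 w y).
  by apply/funext => y; rewrite addrA subrr add0r.
rewrite EQ QcIn // in E1.
have E2 := L1 (fun y => - u y + c * indicator1 w y) z.
rewrite /= {2}/indicator1 eq_sym (negbTE wz) mulr0 addr0 in E2.
have E3 : - u z * Q (indicator1 z) z <= Q (fun y => - u y + c * indicator1 w y) z.
  apply: E2 => y; rewrite /indicator1; case: eqP => [->|_].
    by rewrite mulr1 /c addNr.
  by rewrite mulr0 addr0 oppr_ge0.
rewrite /upper_op.
  rewrite mulrN -mulNr; rewrite mulNr in E3; lra.
exact: u0.
Qed.

Lemma K2b (u : X -> R) x : (forall y, u y <= 0) ->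
  Q u x <= u x * Q (indicator1 x) x.
Proof.
move=> u0.
have E1 := QsubQ u x.
have E2 := L1 (fun y => - u y) x.
have E3 : - u x * Q (indicator1 x) x <= Q (fun y => - u y) x.
  by apply: E2 => y; rewrite oppr_ge0.
lra.
Qed.

Lemma K3 (u : X -> R) (A : pred X) z : (forall y, u y <= 0) ->
  (forall w, A w -> upper_op Q (indicator1 w) z <= 0) ->
  - Q u z <= Cst * \sum_(w | ~~ A w) (- u w).
Proof.
move=> u0 hA.
have E1 := L2 u z.
have E2 : \sum_w' Q (fun y => u w' * indicator1 w' y) z =
          \sum_w' (- u w') * Q (fun y => - indicator1 w' y) z.
  by apply: eq_bigr => i _; rewrite QcIn.
rewrite E2 in E1.
have E3 : - \sum_w' (- u w') * Q (fun y => - indicator1 w' y) z <=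
           Cst * \sum_(w | ~~ A w) (- u w).
  rewrite -sumrN (bigID A) /= mulr_sumr.
  rewrite -[X in _ <= X]add0r; apply: lerD.
    apply: sumr_le0 => i Ai; rewrite -mulrN mulr_ge0_le0 ?oppr_ge0 //.
    exact: hA.
  apply: ler_sum => i _; rewrite -mulrN mulrC; apply: ler_wpM2r; first by rewrite oppr_ge0.
  apply: le_trans (Cbound i z); by rewrite -normrN ler_norm.
lra.
Qed.

Lemma Kquad (u : X -> R) :
  \sum_w 2 * pos (u w) * Q u w <= (2 * Cst * #|X|%:R) * \sum_w pp (u w).
Proof.
have a0 : forall w, 0 <= pos (u w).
  by move=> w; rewrite /pos; case: (leP 0 (u w)) => h //; rewrite ltW.
apply: (@le_trans _ _ (\sum_w 2 * pos (u w) * (Cst * \sum_w' pos (u w')))).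
  apply: ler_sum => w _; case: (ltP 0 (u w)) => h.
    by apply: ler_wpM2l; [rewrite mulr_ge0 | exact: K1].
  have -> : pos (u w) = 0 by rewrite /pos; case: (leP 0 (u w)) => h2 //; apply/eqP; rewrite eq_le h h2.
  by rewrite mulr0 !mul0r.
have E1 : \sum_w 2 * pos (u w) * (Cst * \sum_w' pos (u w')) =
    Cst * \sum_w \sum_w' (2 * pos (u w) * pos (u w')).
  rewrite [RHS]mulr_sumr; apply: eq_bigr => w _; rewrite -mulr_sumr; ring.
rewrite E1.
have E2 : \sum_w \sum_w' (2 * pos (u w) * pos (u w')) <=
          \sum_w \sum_w' (pp (u w) + pp (u w')).
  apply: ler_sum => w _; apply: ler_sum => w' _; rewrite /pp.
  have := sqr_ge0 (pos (u w) - pos (u w')); nra.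
have E3 : \sum_w \sum_w' (pp (u w) + pp (u w')) = (2 * #|X|%:R) * \sum_w pp (u w).
  under eq_bigr do rewrite big_split /=.
  rewrite big_split /= exchange_big /= sumr_const -mulr_natr.
  rewrite -/(#|X|).

  ring.
have C0 := Cst_ge0.
apply: le_trans (ler_wpM2l C0 E2) _; rewrite E3 le_eqVlt; apply/orP; left; apply/eqP; ring.
Qed.

End Alg.


Lemma rcont {R : realType} (f : R -> R) (a l : R) :
  (fun h : R => h^-1 * (f h - a)) @ 0^'+ --> l -> f x @[x --> 0^'+] --> a.
Proof.
move=> H.
have H0 : (fun h : R => h) @ 0^'+ --> (0:R) by apply: cvg_at_right_filter; exact: cvg_id.
have FF : Filter ((0:R)^'+) by exact: at_right_proper_filter.
have H1 : (fun h : R => h * (h^-1 * (f h - a))) @ 0^'+ --> (0:R).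
  by rewrite -[X in _ --> X](mul0r l); exact: (cvgM H0 H).
have H2 : (fun h : R => a + h * (h^-1 * (f h - a))) @ 0^'+ --> a.
  by rewrite -[X in _ --> X]addr0; apply: cvgD => //; exact: cvg_cst.
apply: cvg_trans _ H2; apply: near_eq_cvg.
near=> h.
have h0 : h != 0 by apply: lt0r_neq0; near: h; exact: nbhs_right_gt.
rewrite /=; field.
Unshelve. all: by end_near.
Qed.

Lemma is_derive_bigsum {X : finType} {R : realType} (P : pred X) (F : X -> R -> R)
  (dF : X -> R) (t : R) : (forall w, is_derive t 1 (F w) (dF w)) ->
  is_derive t 1 (fun s => \sum_(w | P w) F w s) (\sum_(w | P w) dF w).
Proof.
move=> H.
suff G : forall r : seq X,
    is_derive t 1 (fun s => \sum_(w <- r | P w) F w s) (\sum_(w <- r | P w) dF w).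
  exact: G.
elim => [|a r IH].
  have -> : (fun s => \sum_(w <- [::] | P w) F w s) = cst 0.
    by apply/funext => s; rewrite big_nil.
  rewrite big_nil; exact: is_derive_cst.
have -> : (fun s => \sum_(w <- a :: r | P w) F w s) =
    ((fun s => if P a then F a s else 0) + (fun s => \sum_(w <- r | P w) F w s))%R.
  by apply/funext => s; rewrite big_cons /=; case: (P a); rewrite ?add0r.
rewrite big_cons.
have -> : (if P a then dF a + \sum_(j <- r | P j) dF j else \sum_(j <- r | P j) dF j)
  = (if P a then dF a else 0) + \sum_(j <- r | P j) dF j by case: (P a); rewrite ?add0r.
apply: is_deriveD => //.
case: (P a) => //.
have -> : (fun _ : R => 0) = cst (0:R) by [].
exact: is_derive_cst.
Qed.

Lemma cvg_bigsum {X : finType} {R : realType} (P : pred X) (F : X -> R -> R)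
  (L : X -> R) : (forall w, F w x @[x --> 0^'+] --> L w) ->
  (fun s => \sum_(w | P w) F w s) x @[x --> 0^'+] --> \sum_(w | P w) L w.
Proof.
move=> H.
suff G : forall r : seq X,
    (fun s => \sum_(w <- r | P w) F w s) x @[x --> 0^'+] --> \sum_(w <- r | P w) L w.
  exact: G.
elim => [|a r IH].
  have -> : (fun s => \sum_(w <- [::] | P w) F w s) = (fun _ => 0).
    by apply/funext => s; rewrite big_nil.
  rewrite big_nil; exact: cvg_cst.
have -> : (fun s => \sum_(w <- a :: r | P w) F w s) =
    (fun s => (if P a then F a s else 0) + \sum_(w <- r | P w) F w s).
  by apply/funext => s; rewrite big_cons /=; case: (P a); rewrite ?add0r.
rewrite big_cons.
have -> : (if P a then L a + \sum_(j <- r | P j) L j else \sum_(j <- r | P j) L j)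
  = (if P a then L a else 0) + \sum_(j <- r | P j) L j by case: (P a); rewrite ?add0r.
apply: cvgD => //.
case: (P a) => //; exact: cvg_cst.
Qed.


Lemma pos_le0 {R : realType} (r : R) : r <= 0 -> pos r = 0.
Proof. by rewrite /pos; case: (leP 0 r) => // h1 h2; apply/eqP; rewrite eq_le h1 h2. Qed.

Lemma pp_ge0 {R : realType} (r : R) : 0 <= pp r.
Proof. by rewrite /pp sqr_ge0. Qed.

Lemma pp_le0 {R : realType} (r : R) : pp r <= 0 -> r <= 0.
Proof.
rewrite /pp /pos; case: (leP 0 r) => h1 h2; last exact: ltW.
have : r ^+ 2 = 0 by apply/eqP; rewrite eq_le h2 sqr_ge0.
by move/eqP; rewrite sqrf_eq0 => /eqP ->.
Qed.

Section Main.
Context {X : finType} {R : realType} (Q : (X -> R) -> (X -> R))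
  (T : R -> (X -> R) -> (X -> R)).
Hypothesis HQ : lower_transition_rate_operator Q.
Hypothesis HT : lower_semigroup_of Q T.
Variable x : X.

Let g : X -> R := fun z => - indicator1 x z.

Lemma Tder f z (t : R) : 0 < t -> is_derive t 1 (fun s => T s f z) (Q (T t f) z).
Proof.
move=> t0; have [_ [_ H3]] := HT f.
have [d e] := H3 t z t0.
rewrite -e derive1E; exact: derivableP.
Qed.

Lemma Tcont f z : (fun s => T s f z) x @[x --> 0^'+] --> f z.
Proof.
have [H1 [H2 _]] := HT f.
apply: rcont; exact: (H2 z).
Qed.

Lemma nonpos (t : R) : 0 < t -> forall w, T t g w <= 0.
Proof.
move=> t0.
set F := fun s => \sum_w pp (T s g w).
have dF : forall s : R, 0 < s ->
    is_derive s 1 F (\sum_w 2 * pos (T s g w) * Q (T s g) w).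
  move=> s s0; apply: (is_derive_bigsum xpredT (fun w s => pp (T s g w))) => w.
  have H := @is_derive_comp1 _ _ _ _ _ _ (@Tder g w s s0) (is_derive_pp (T s g w)); exact: H.
have bnd : forall s : R, 0 < s ->
    \sum_w 2 * pos (T s g w) * Q (T s g) w <= (2 * Cst Q * #|X|%:R) * F s.
  by move=> s s0; apply: Kquad.
have lim : F x @[x --> 0^'+] --> (0:R).
  have E0 : \sum_w pp (g w) = 0.
    rewrite big1 // => w _; rewrite /pp pos_le0 ?expr0n //.
    by rewrite /g /indicator1; case: ifP; rewrite ?oppr0 // lerN10.
  rewrite -[X in _ --> X]E0 /F.
  apply: (cvg_bigsum xpredT (fun w s => pp (T s g w))) => w.
  apply: (continuous_cvg _ _ (Tcont g w)).
  apply: differentiable_continuous; apply/derivable1_diffP.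
  by case: (is_derive_pp (g w)).
have Ft := @gronwall0 _ F (fun s => \sum_w 2 * pos (T s g w) * Q (T s g) w) _ dF bnd lim t t0.
move=> w; apply: pp_le0; apply: le_trans Ft.
rewrite /F (bigD1 w) //= -[X in X <= _]addr0 lerD2l.
by apply: sumr_ge0 => i _; exact: pp_ge0.
Qed.

Lemma base (t : R) : 0 < t -> 0 < - T t g x.
Proof.
move=> t0.
set q := Q (indicator1 x) x.
have H1 : forall s : R, 0 < s -> is_derive s 1 (fun s => - T s g x) (- Q (T s g) x).
  by move=> s s0; have HH := @is_derive_opp _ _ _ _ (@Tder g x s s0); exact: HH.
have H2 : forall s : R, 0 < s -> q * (- T s g x) <= - Q (T s g) x.
  move=> s s0; have := @K2b _ _ Q HQ (T s g) x (@nonpos s s0).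
  by rewrite /q mulrN lerN2 mulrC.
have M := @mono_exp _ _ _ q H1 H2.
have L1 : (fun s => - T s g x) x0 @[x0 --> 0^'+] --> (1:R).
  have -> : (1:R) = - g x by rewrite /g /indicator1 eqxx opprK.
  exact: (cvgN (Tcont g x)).
have L2 := @exp_cvg _ _ q _ L1.
have := @lim_le_right _ _ _ (expR (- (q * t)) * - T t g x) t t0 L2.
move=> /(_ (fun s s0 st => M s t s0 (ltW st))) => H.
by rewrite -(pmulr_rgt0 _ (expR_gt0 (- (q * t)))); apply: lt_le_trans H.
Qed.

Lemma prop (w z : X) : w != z -> 0 < upper_op Q (indicator1 w) z ->
  (forall t : R, 0 < t -> 0 < - T t g w) -> forall t : R, 0 < t -> 0 < - T t g z.
Proof.
move=> wz a0 Hw t t0.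
set q := Q (indicator1 z) z.
have H1 : forall s : R, 0 < s -> is_derive s 1 (fun s => - T s g z) (- Q (T s g) z).
  by move=> s s0; have HH := @is_derive_opp _ _ _ _ (@Tder g z s s0); exact: HH.
have H2 : forall s : R, 0 < s -> q * (- T s g z) < - Q (T s g) z.
  move=> s s0; have := @K2 _ _ Q HQ (T s g) w z (@nonpos s s0) wz.
  have := Hw s s0; rewrite /q; set a := upper_op Q _ _; move: a0; rewrite -/a.
  move: (Q _ z) (Q _ _) (T s g w) (T s g z) => A B C D; nra.
have M := @mono_exp_lt _ _ _ q H1 H2.
have t2 : 0 < t / 2 by rewrite divr_gt0.
have t2t : t / 2 < t by rewrite ltr_pdivrMr // ltr_pMr // ltr1n.
have := M _ _ t2 t2t.
have N : 0 <= - T (t / 2) g z by rewrite oppr_ge0; apply: nonpos.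
have E := expR_gt0 (- (q * (t / 2))).
have E2 : 0 <= expR (- (q * (t / 2))) * - T (t / 2) g z by rewrite mulr_ge0 // ltW.
move=> H; have H3 := le_lt_trans E2 H.
by rewrite -(pmulr_rgt0 _ (expR_gt0 (- (q * t)))).
Qed.

Lemma reach_pos (y : X) : upper_reachable Q x y -> forall t : R, 0 < t -> 0 < - T t g y.
Proof.
case=> n [s [s0 sn H]].
elim: n s y s0 sn H => [|n IH] s y s0 sn H.
  by rewrite -s0 sn; exact: base.
have [H1a H1b] := H 1%N isT.
apply: (@prop (s 1%N) y); first by rewrite -s0.
  by rewrite -s0.
apply: (IH (fun k => s k.+1) (s 1%N)) => // k /andP[k1 kn].
have := H k.+1; rewrite /= ?ltnS ?kn => /(_ isT).
by rewrite prednK.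
Qed.

Lemma reach_ext (w z : X) : upper_reachable Q x w -> w != z ->
  0 < upper_op Q (indicator1 w) z -> upper_reachable Q x z.
Proof.
case=> n [s [s0 sn H]] wz a0.
exists n.+1, (fun k => if k is k'.+1 then s k' else z); split => //.
case=> [|k] //= kn.
case: k kn => [|k] kn /=.
  by rewrite s0.
exact: H.
Qed.

Lemma unreach_zero (y : X) : ~ upper_reachable Q x y ->
  forall t : R, 0 < t -> - T t g y <= 0.
Proof.
move=> ny t t0.
pose A := fun w => `[< upper_reachable Q x w >].
have Ax : A x.
  apply/asboolP; exists 0%N, (fun _ => x); split => //.
  by case=> [|k] /andP[].
have Ay : ~~ A y by apply/negP => /asboolP.
set F := fun s => \sum_(w | ~~ A w) (- T s g w).
have dF : forall s : R, 0 < s ->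
    is_derive s 1 F (\sum_(w | ~~ A w) (- Q (T s g) w)).
  move=> s s0; apply: (is_derive_bigsum (fun w => ~~ A w) (fun w s => - T s g w)) => w.
  have HH := @is_derive_opp _ _ _ _ (@Tder g w s s0); exact: HH.
have bnd : forall s : R, 0 < s ->
    \sum_(w | ~~ A w) (- Q (T s g) w) <= (Cst Q * #|[pred w | ~~ A w]|%:R) * F s.
  move=> s s0.
  apply: (@le_trans _ _ (\sum_(w | ~~ A w) (Cst Q * F s))).
    apply: ler_sum => z nAz; apply: K3 => //; first exact: nonpos.
    move=> w Aw; rewrite leNgt; apply/negP => apos.
    apply: (negP nAz); apply/asboolP; apply: (@reach_ext w) => //.
      exact/asboolP.
    by apply/negP => /eqP wz; move: nAz; rewrite -wz Aw.
  by rewrite sumr_const -mulr_natr le_eqVlt; apply/orP; left; apply/eqP; ring.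
have lim : F x0 @[x0 --> 0^'+] --> (0:R).
  have E0 : \sum_(w | ~~ A w) (- g w) = 0.
    rewrite big1 // => w nAw; rewrite /g /indicator1; case: eqP => [wx|]; last by rewrite oppr0 oppr0.
    by move: nAw; rewrite wx Ax.
  rewrite -[X in _ --> X]E0 /F.
  apply: (cvg_bigsum (fun w => ~~ A w) (fun w s => - T s g w)) => w.
  exact: (cvgN (Tcont g w)).
have Ft := @gronwall0 _ F _ _ dF bnd lim t t0.
apply: le_trans Ft.
rewrite /F (bigD1 y) //= -[X in X <= _]addr0 lerD2l.
by apply: sumr_ge0 => i _; rewrite oppr_ge0; apply: nonpos.
Qed.

End Main.


Theorem proposition11 (X : finType) (R : realType)
  (Q : (X -> R) -> (X -> R)) (T : R -> (X -> R) -> (X -> R)) :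
  lower_transition_rate_operator Q ->
  lower_semigroup_of Q T ->
  forall (t : R), 0 < t -> forall x y : X,
    0 < upper_semigroup T t (indicator1 x) y <-> upper_reachable Q x y.
Proof.
move=> HQ HT t t0 x y.
rewrite /upper_semigroup; split => H.
  case: (pselect (upper_reachable Q x y)) => // ny.
  have := @unreach_zero _ _ Q T HQ HT x y ny t t0.
  by rewrite leNgt H.
exact: (@reach_pos _ _ Q T HQ HT x y H t t0).
Qed.
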